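(* The space $\mathcal O_2$ is homotopy equivalent to the circle $S^1$.
   Context: A polynomial knot is a map $\phi:\mathbb R\to\mathbb R^3$ with real polynomial components which is a smooth embedding ($\phi$ injective and $\phi'(t)\neq0$ for all $t$). $\mathcal A_2$ is the set of polynomial maps $t\mapsto(a_0,\ b_0+b_1t,\ c_0+c_1t+c_2t^2)$ with $(a_0,b_0,b_1,c_0,c_1,c_2)\in\mathbb R^6$ arbitrary, topologized by identifying it with $\mathbb R^6$ via its coefficient vector. $\mathcal O_2$ is the subspace of $\mathcal A_2$ consisting of polynomial knots. *)

(* Defs.v *)
From Stdlib Require Import Reals Lra.
Open Scope R_scope.

(** A "space" is a type together with a distance function; all spaces used
    below are subspaces of Euclidean spaces with the Euclidean distance. *)
Definition continuous_map {A B : Type} (dA : A -> A -> R) (dB : B -> B -> R)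
  (f : A -> B) : Prop :=
  forall (x : A) (eps : R), 0 < eps ->
    exists delta : R, 0 < delta /\
      forall y : A, dA x y < delta -> dB (f x) (f y) < eps.

Definition I01 : Type := { s : R | 0 <= s <= 1 }.

Lemma I01_0_proof : 0 <= 0 <= 1. Proof. lra. Qed.
Lemma I01_1_proof : 0 <= 1 <= 1. Proof. lra. Qed.
Definition I01_0 : I01 := exist _ 0 I01_0_proof.
Definition I01_1 : I01 := exist _ 1 I01_1_proof.

(** Product metric (max metric) on A x [0,1]; it induces the product topology. *)
Definition dprodI {A : Type} (dA : A -> A -> R) (p q : A * I01) : R :=
  Rmax (dA (fst p) (fst q)) (Rabs (proj1_sig (snd p) - proj1_sig (snd q))).

Definition homotopic {A B : Type} (dA : A -> A -> R) (dB : B -> B -> R)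
  (f g : A -> B) : Prop :=
  exists H : A * I01 -> B,
    continuous_map (dprodI dA) dB H /\
    (forall x, H (x, I01_0) = f x) /\
    (forall x, H (x, I01_1) = g x).

Definition homotopy_equivalent {A B : Type} (dA : A -> A -> R) (dB : B -> B -> R)
  : Prop :=
  exists (f : A -> B) (g : B -> A),
    continuous_map dA dB f /\ continuous_map dB dA g /\
    homotopic dA dA (fun x => g (f x)) (fun x => x) /\
    homotopic dB dB (fun y => f (g y)) (fun y => y).

Definition R3 : Type := (R * R * R)%type.
Definition R6 : Type := (R * R * R * R * R * R)%type.

Definition dist6 (u v : R6) : R :=
  let '(u1, u2, u3, u4, u5, u6) := u in
  let '(v1, v2, v3, v4, v5, v6) := v in
  sqrt ((u1 - v1)^2 + (u2 - v2)^2 + (u3 - v3)^2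
        + (u4 - v4)^2 + (u5 - v5)^2 + (u6 - v6)^2).

Definition dist2 (u v : R * R) : R :=
  sqrt ((fst u - fst v)^2 + (snd u - snd v)^2).

Definition dsub {A : Type} (P : A -> Prop) (d : A -> A -> R)
  (x y : { a : A | P a }) : R := d (proj1_sig x) (proj1_sig y).

(** phi : R -> R^3 is a smooth embedding: injective with nowhere vanishing
    derivative (components are differentiable with the given derivatives). *)
Definition is_knot (phi : R -> R3) : Prop :=
  (forall s t : R, phi s = phi t -> s = t) /\
  (forall t : R, exists d1 d2 d3 : R,
      derivable_pt_lim (fun u => fst (fst (phi u))) t d1 /\
      derivable_pt_lim (fun u => snd (fst (phi u))) t d2 /\
      derivable_pt_lim (fun u => snd (phi u)) t d3 /\
      (d1, d2, d3) <> (0, 0, 0)).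

Definition A2map (c : R6) : R -> R3 :=
  let '(a0, b0, b1, c0, c1, c2) := c in
  fun t => (a0, b0 + b1 * t, c0 + c1 * t + c2 * t ^ 2).

(** O_2 as a subspace of A_2 = R^6. *)
Definition O2_pred (c : R6) : Prop := is_knot (A2map c).
Definition O2 : Type := { c : R6 | O2_pred c }.
Definition dO2 : O2 -> O2 -> R := dsub O2_pred dist6.

Definition S1_pred (p : R * R) : Prop := fst p ^ 2 + snd p ^ 2 = 1.
Definition S1 : Type := { p : R * R | S1_pred p }.
Definition dS1 : S1 -> S1 -> R := dsub S1_pred dist2.

(* Main.v *)
Require Import Defs.
From Stdlib Require Import Reals Lra Ranalysis ProofIrrelevance.
From Coquelicot Require Import Coquelicot.
Open Scope R_scope.

Definition ccont {A : Type} (d : A -> A -> R) (h : A -> R) : Prop :=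
  forall x eps, 0 < eps -> exists delta, 0 < delta /\
    forall y, d x y < delta -> Rabs (h x - h y) < eps.

Lemma ccont_lip {A} (d : A -> A -> R) h :
  (forall x y, Rabs (h x - h y) <= d x y) -> ccont d h.
Proof. intros H x eps He; exists eps; split; auto; intros y Hy.
  specialize (H x y); lra. Qed.

Lemma ccont_const {A} (d : A -> A -> R) c : ccont d (fun _ => c).
Proof. intros x eps He; exists 1; split; [lra|]; intros y _.
  replace (c - c) with 0 by ring; rewrite Rabs_R0; lra. Qed.

Lemma ccont_ext {A} (d : A -> A -> R) h1 h2 :
  (forall x, h1 x = h2 x) -> ccont d h1 -> ccont d h2.
Proof. intros E H x eps He; destruct (H x eps He) as [de [Hd Hy]].
  exists de; split; auto; intros y Hy'; rewrite <- !E; auto. Qed.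

Lemma ccont_plus {A} (d : A -> A -> R) h1 h2 :
  ccont d h1 -> ccont d h2 -> ccont d (fun x => h1 x + h2 x).
Proof. intros H1 H2 x eps He.
  destruct (H1 x (eps/2)) as [d1 [Hd1 Hy1]]; [lra|].
  destruct (H2 x (eps/2)) as [d2 [Hd2 Hy2]]; [lra|].
  exists (Rmin d1 d2); split; [apply Rmin_pos; auto|]; intros y Hy.
  assert (A1 := Hy1 y ltac:(eapply Rlt_le_trans; [exact Hy| apply Rmin_l])).
  assert (A2 := Hy2 y ltac:(eapply Rlt_le_trans; [exact Hy| apply Rmin_r])).
  replace (h1 x + h2 x - (h1 y + h2 y)) with ((h1 x - h1 y) + (h2 x - h2 y)) by ring.
  eapply Rle_lt_trans; [apply Rabs_triang|]; lra. Qed.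

Lemma ccont_comp {A} (d : A -> A -> R) h g :
  ccont d h -> (forall x, continuity_pt g (h x)) -> ccont d (fun x => g (h x)).
Proof. intros H Hg x eps He.
  specialize (Hg x). unfold continuity_pt, continue_in, limit1_in, limit_in in Hg.
  destruct (Hg eps He) as [a [Ha Hl]].
  destruct (H x a Ha) as [de [Hd Hy]].
  exists de; split; auto; intros y Hy'.
  destruct (Req_dec (h x) (h y)) as [E|E].
  - rewrite E; replace (g (h y) - g (h y)) with 0 by ring; rewrite Rabs_R0; lra.
  - assert (Q := Hl (h y)). simpl in Q. unfold R_dist in Q.
    rewrite Rabs_minus_sym. apply Q. split.
    + split; [exact I| auto].
    + rewrite Rabs_minus_sym; auto. Qed.

Lemma ccont_opp {A} (d : A -> A -> R) h : ccont d h -> ccont d (fun x => - h x).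
Proof. intros H. apply (ccont_comp d h (fun x => - x)); auto. intros; reg. Qed.

Lemma ccont_mult {A} (d : A -> A -> R) h1 h2 :
  ccont d h1 -> ccont d h2 -> ccont d (fun x => h1 x * h2 x).
Proof. intros H1 H2.
  apply (ccont_ext d (fun x => (fun y => y*y/4) (h1 x + h2 x) + - (fun y => y*y/4) (h1 x + - h2 x))).
  { intros; simpl; field. }
  apply ccont_plus; [|apply ccont_opp];
  apply (ccont_comp d _ (fun y => y*y/4)); try (intros; reg);
  apply ccont_plus; auto; apply ccont_opp; auto. Qed.

Lemma ccont_sqrt {A} (d : A -> A -> R) h :
  ccont d h -> (forall x, 0 <= h x) -> ccont d (fun x => sqrt (h x)).
Proof. intros H P. apply ccont_comp; auto. intros; apply continuity_pt_sqrt; auto. Qed.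

Lemma ccont_inv {A} (d : A -> A -> R) h :
  ccont d h -> (forall x, h x <> 0) -> ccont d (fun x => / h x).
Proof. intros H P. apply (ccont_comp d h (fun x => / x)); auto. intros; reg. apply P. Qed.

Definition q1 (u : R6) : R := let '(a,_,_,_,_,_) := u in a.
Definition q2 (u : R6) : R := let '(_,a,_,_,_,_) := u in a.
Definition q3 (u : R6) : R := let '(_,_,a,_,_,_) := u in a.
Definition q4 (u : R6) : R := let '(_,_,_,a,_,_) := u in a.
Definition q5 (u : R6) : R := let '(_,_,_,_,a,_) := u in a.
Definition q6 (u : R6) : R := let '(_,_,_,_,_,a) := u in a.

Lemma sqrt_le_sum (S T : R) : 0 <= T -> S <= T * T -> sqrt S <= T.
Proof. intros; rewrite <- (sqrt_square T) by auto; apply sqrt_le_1_alt; auto. Qed.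

Lemma abs_le_sqrt (a S : R) : a * a <= S -> Rabs a <= sqrt S.
Proof. intros; rewrite <- sqrt_Rsqr_abs; apply sqrt_le_1_alt; unfold Rsqr; auto. Qed.

Lemma dist6_le u v :
  dist6 u v <= Rabs (q1 u - q1 v) + Rabs (q2 u - q2 v) + Rabs (q3 u - q3 v)
    + Rabs (q4 u - q4 v) + Rabs (q5 u - q5 v) + Rabs (q6 u - q6 v).
Proof.
  destruct u as [[[[[u1 u2] u3] u4] u5] u6]; destruct v as [[[[[v1 v2] v3] v4] v5] v6].
  cbv beta iota zeta delta [dist6 q1 q2 q3 q4 q5 q6].
  apply sqrt_le_sum.
  - pose proof (Rabs_pos (u1-v1)); pose proof (Rabs_pos (u2-v2)); pose proof (Rabs_pos (u3-v3));
    pose proof (Rabs_pos (u4-v4)); pose proof (Rabs_pos (u5-v5)); pose proof (Rabs_pos (u6-v6)); lra.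
  - rewrite <- (pow2_abs (u1-v1)), <- (pow2_abs (u2-v2)), <- (pow2_abs (u3-v3)),
      <- (pow2_abs (u4-v4)), <- (pow2_abs (u5-v5)), <- (pow2_abs (u6-v6)).
    pose proof (Rabs_pos (u1-v1)); pose proof (Rabs_pos (u2-v2)); pose proof (Rabs_pos (u3-v3));
    pose proof (Rabs_pos (u4-v4)); pose proof (Rabs_pos (u5-v5)); pose proof (Rabs_pos (u6-v6)).
    set (a1 := Rabs (u1-v1)) in *; set (a2 := Rabs (u2-v2)) in *; set (a3 := Rabs (u3-v3)) in *;
    set (a4 := Rabs (u4-v4)) in *; set (a5 := Rabs (u5-v5)) in *; set (a6 := Rabs (u6-v6)) in *.
    simpl. nra.
Qed.

Lemma sq_nonneg' x : 0 <= x ^ 2. Proof. nra. Qed.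

Ltac six u v :=
  destruct u as [[[[[u1 u2] u3] u4] u5] u6]; destruct v as [[[[[v1 v2] v3] v4] v5] v6];
  unfold dist6; simpl; apply abs_le_sqrt;
  pose proof (sq_nonneg' (u1-v1)); pose proof (sq_nonneg' (u2-v2)); pose proof (sq_nonneg' (u3-v3));
  pose proof (sq_nonneg' (u4-v4)); pose proof (sq_nonneg' (u5-v5)); pose proof (sq_nonneg' (u6-v6));
  simpl in *; lra.

Lemma q1_le u v : Rabs (q1 u - q1 v) <= dist6 u v. Proof. six u v. Qed.
Lemma q2_le u v : Rabs (q2 u - q2 v) <= dist6 u v. Proof. six u v. Qed.
Lemma q3_le u v : Rabs (q3 u - q3 v) <= dist6 u v. Proof. six u v. Qed.
Lemma q4_le u v : Rabs (q4 u - q4 v) <= dist6 u v. Proof. six u v. Qed.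
Lemma q5_le u v : Rabs (q5 u - q5 v) <= dist6 u v. Proof. six u v. Qed.
Lemma q6_le u v : Rabs (q6 u - q6 v) <= dist6 u v. Proof. six u v. Qed.

Lemma dist2_le u v : dist2 u v <= Rabs (fst u - fst v) + Rabs (snd u - snd v).
Proof. unfold dist2. apply sqrt_le_sum.
  - pose proof (Rabs_pos (fst u - fst v)); pose proof (Rabs_pos (snd u - snd v)); lra.
  - rewrite <- (pow2_abs (fst u - fst v)), <- (pow2_abs (snd u - snd v)).
    pose proof (Rabs_pos (fst u - fst v)); pose proof (Rabs_pos (snd u - snd v)). simpl; nra. Qed.

Lemma fst_le u v : Rabs (fst u - fst v) <= dist2 u v.
Proof. unfold dist2; apply abs_le_sqrt; pose proof (sq_nonneg' (snd u - snd v));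
  pose proof (sq_nonneg' (fst u - fst v)); simpl in *; lra. Qed.
Lemma snd_le u v : Rabs (snd u - snd v) <= dist2 u v.
Proof. unfold dist2; apply abs_le_sqrt; pose proof (sq_nonneg' (snd u - snd v));
  pose proof (sq_nonneg' (fst u - fst v)); simpl in *; lra. Qed.

Lemma cont_R6 {A} (d : A -> A -> R) (F : A -> R6) :
  ccont d (fun x => q1 (F x)) -> ccont d (fun x => q2 (F x)) -> ccont d (fun x => q3 (F x)) ->
  ccont d (fun x => q4 (F x)) -> ccont d (fun x => q5 (F x)) -> ccont d (fun x => q6 (F x)) ->
  continuous_map d dist6 F.
Proof. intros H1 H2 H3 H4 H5 H6 x eps He.
  destruct (H1 x (eps/6)) as [d1 [P1 Q1]]; [lra|].
  destruct (H2 x (eps/6)) as [d2 [P2 Q2]]; [lra|].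
  destruct (H3 x (eps/6)) as [d3 [P3 Q3]]; [lra|].
  destruct (H4 x (eps/6)) as [d4 [P4 Q4]]; [lra|].
  destruct (H5 x (eps/6)) as [d5 [P5 Q5]]; [lra|].
  destruct (H6 x (eps/6)) as [d6 [P6 Q6]]; [lra|].
  exists (Rmin d1 (Rmin d2 (Rmin d3 (Rmin d4 (Rmin d5 d6))))).
  split. { repeat apply Rmin_pos; auto. }
  intros y Hy.
  assert (y1 := Q1 y ltac:(eapply Rlt_le_trans; [exact Hy|]; repeat (apply Rmin_l || (eapply Rle_trans; [apply Rmin_r|])))).
  assert (y2 := Q2 y ltac:(eapply Rlt_le_trans; [exact Hy|]; repeat (apply Rmin_l || (eapply Rle_trans; [apply Rmin_r|])))).
  assert (y3 := Q3 y ltac:(eapply Rlt_le_trans; [exact Hy|]; repeat (apply Rmin_l || (eapply Rle_trans; [apply Rmin_r|])))).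
  assert (y4 := Q4 y ltac:(eapply Rlt_le_trans; [exact Hy|]; repeat (apply Rmin_l || (eapply Rle_trans; [apply Rmin_r|])))).
  assert (y5 := Q5 y ltac:(eapply Rlt_le_trans; [exact Hy|]; repeat (apply Rmin_l || (eapply Rle_trans; [apply Rmin_r|])))).
  assert (y6 := Q6 y ltac:(eapply Rlt_le_trans; [exact Hy|]; repeat (apply Rmin_r || (eapply Rle_trans; [apply Rmin_r|])))).
  pose proof (dist6_le (F x) (F y)). lra.
Qed.

Definition good (c : R6) : Prop := q3 c <> 0 \/ (q6 c = 0 /\ q5 c <> 0).

Lemma O2_good c : O2_pred c -> good c.
Proof.
  destruct c as [[[[[a0 b0] b1] c0] c1] c2]. unfold O2_pred, is_knot, good; simpl.
  intros [Hinj _].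
  destruct (Req_dec b1 0) as [Hb|Hb]; [right|left; auto]. subst b1.
  assert (K : forall s t, c1 * s + c2 * s ^ 2 = c1 * t + c2 * t ^ 2 -> s = t).
  { intros s t E. apply Hinj. simpl. f_equal; [f_equal; ring| lra]. }
  destruct (Req_dec c2 0) as [Hc|Hc].
  - split; auto. intros Hc1. subst. assert (0 = 1) by (apply K; ring). lra.
  - exfalso. assert (E : 0 = - c1 / c2) by (apply K; field; auto).
    assert (c1 = 0). { apply (f_equal (fun x => x * c2)) in E. field_simplify in E; auto. lra. }
    subst c1. assert (1 = -1) by (apply K; ring). lra.
Qed.

Lemma good_O2 c : good c -> O2_pred c.
Proof.
  destruct c as [[[[[a0 b0] b1] c0] c1] c2]. unfold O2_pred, is_knot, good; simpl.
  intros G. split.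
  - intros s t E. injection E as E1 E2.
    destruct G as [G|[G1 G2]].
    + apply (Rmult_eq_reg_l b1); auto; lra.
    + subst c2. apply (Rmult_eq_reg_l c1); auto; lra.
  - intros t. exists 0, b1, (c1 + 2 * c2 * t). split; [|split; [|split]].
    + apply derivable_pt_lim_const.
    + apply is_derive_Reals. auto_derive; auto; ring.
    + apply is_derive_Reals. auto_derive; auto; ring.
    + intros E. injection E as E1 E2. destruct G as [G|[G1 G2]]; auto.
      subst c2. apply G2. lra.
Qed.

Definition rr (c : R6) : R := sqrt (q3 c ^ 2 + q5 c ^ 2).

Lemma good_pos c : good c -> 0 < q3 c ^ 2 + q5 c ^ 2.
Proof. intros [G|[_ G]].
  - pose proof (sq_nonneg' (q5 c)). assert (0 < q3 c ^ 2) by nra. lra.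
  - pose proof (sq_nonneg' (q3 c)). assert (0 < q5 c ^ 2) by nra. lra. Qed.

Lemma rr_pos c : good c -> 0 < rr c.
Proof. intros G; unfold rr; apply sqrt_lt_R0, good_pos; auto. Qed.

Lemma f_S1 (x : O2) : S1_pred (q3 (proj1_sig x) / rr (proj1_sig x), q5 (proj1_sig x) / rr (proj1_sig x)).
Proof. destruct x as [c Hc]; simpl. apply O2_good in Hc.
  pose proof (rr_pos c Hc). unfold S1_pred; cbn [fst snd].
  assert (E : rr c ^ 2 = q3 c ^ 2 + q5 c ^ 2) by (unfold rr; apply pow2_sqrt; pose proof (good_pos c Hc); lra).
  replace ((q3 c / rr c) ^ 2 + (q5 c / rr c) ^ 2) with ((q3 c ^ 2 + q5 c ^ 2) / rr c ^ 2) by (field; lra).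
  rewrite E; field; pose proof (good_pos c Hc); lra. Qed.

Definition fmap (x : O2) : S1 := exist _ _ (f_S1 x).

Lemma g_O2 (p : S1) : O2_pred (0, 0, fst (proj1_sig p), 0, snd (proj1_sig p), 0).
Proof. apply good_O2. destruct p as [[a b] H]; unfold S1_pred, good in *; simpl in *.
  destruct (Req_dec a 0); [right; split; auto; intro; subst; lra | left; auto]. Qed.

Definition gmap (p : S1) : O2 := exist _ _ (g_O2 p).

Definition kk (c : R6) (s : R) := s + (1 - s) / rr c.

Definition Hvec (p : O2 * I01) : R6 :=
  let c := proj1_sig (fst p) in let s := proj1_sig (snd p) in
  (s * q1 c, s * q2 c, q3 c * kk c s, s * q4 c, q5 c * kk c s, s * q6 c).

Lemma kk_pos c s : good c -> 0 <= s <= 1 -> 0 < kk c s.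
Proof. intros G Hs. pose proof (rr_pos c G). unfold kk.
  assert (0 <= (1 - s) / rr c) by (apply Rdiv_le_0_compat; lra).
  destruct (Req_dec s 0). { subst. assert (0 < (1-0)/rr c) by (apply Rdiv_lt_0_compat; lra). lra. }
  lra. Qed.

Lemma H_O2 p : O2_pred (Hvec p).
Proof. destruct p as [[c Hc] [s Hs]]. apply good_O2. pose proof (O2_good c Hc) as Gc.
  pose proof (kk_pos c s Gc Hs). unfold Hvec, good in *; simpl in *.
  destruct Gc as [G|[G1 G2]].
  - left. apply Rmult_integral_contrapositive; split; lra.
  - right. rewrite G1. split; [ring|]. apply Rmult_integral_contrapositive; split; lra. Qed.

Definition Hmap (p : O2 * I01) : O2 := exist _ _ (H_O2 p).

Lemma sig_eq {A} {P : A -> Prop} (x y : {a | P a}) : proj1_sig x = proj1_sig y -> x = y.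
Proof. destruct x, y; simpl; intros; subst; f_equal; apply proof_irrelevance. Qed.

Lemma cont_R2 {A} (d : A -> A -> R) (F : A -> R * R) :
  ccont d (fun x => fst (F x)) -> ccont d (fun x => snd (F x)) -> continuous_map d dist2 F.
Proof. intros H1 H2 x eps He.
  destruct (H1 x (eps/2)) as [d1 [P1 Q1]]; [lra|].
  destruct (H2 x (eps/2)) as [d2 [P2 Q2]]; [lra|].
  exists (Rmin d1 d2); split; [apply Rmin_pos; auto|]; intros y Hy.
  assert (A1 := Q1 y ltac:(eapply Rlt_le_trans; [exact Hy| apply Rmin_l])).
  assert (A2 := Q2 y ltac:(eapply Rlt_le_trans; [exact Hy| apply Rmin_r])).
  pose proof (dist2_le (F x) (F y)); lra. Qed.

Lemma ccont_invrr {A} (d : A -> A -> R) (G : A -> R6) :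
  ccont d (fun x => q3 (G x)) -> ccont d (fun x => q5 (G x)) -> (forall x, good (G x)) ->
  ccont d (fun x => / rr (G x)).
Proof. intros H3 H5 Hg. apply (ccont_inv d (fun x => rr (G x))).
  - apply (ccont_ext d (fun x => sqrt (q3 (G x) * q3 (G x) + q5 (G x) * q5 (G x)))).
    { intros; unfold rr; f_equal; ring. }
    apply ccont_sqrt. { apply ccont_plus; apply ccont_mult; auto. }
    intros; nra.
  - intros x; pose proof (rr_pos _ (Hg x)); lra. Qed.

Lemma co_O2 i : (forall u v, Rabs (i u - i v) <= dist6 u v) -> ccont dO2 (fun x => i (proj1_sig x)).
Proof. intros H; apply ccont_lip; intros; apply H. Qed.

Lemma co_P i : (forall u v, Rabs (i u - i v) <= dist6 u v) ->
  ccont (dprodI dO2) (fun p => i (proj1_sig (fst p))).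
Proof. intros H; apply ccont_lip; intros; unfold dprodI.
  eapply Rle_trans; [apply H| apply Rmax_l]. Qed.

Lemma co_s {A} (d : A -> A -> R) : ccont (dprodI d) (fun p => proj1_sig (snd p)).
Proof. apply ccont_lip; intros; unfold dprodI; apply Rmax_r. Qed.

Lemma fmap_cont : continuous_map dO2 dS1 fmap.
Proof.
  change (continuous_map dO2 dist2 (fun x => proj1_sig (fmap x))).
  assert (G : forall x : O2, good (proj1_sig x)) by (intros [c Hc]; apply O2_good; auto).
  assert (Iv := ccont_invrr dO2 (fun x => proj1_sig x) (co_O2 _ q3_le) (co_O2 _ q5_le) G).
  apply cont_R2; simpl; unfold Rdiv; apply ccont_mult; auto; [apply co_O2, q3_le|apply co_O2, q5_le].
Qed.

Lemma gmap_cont : continuous_map dS1 dO2 gmap.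
Proof.
  change (continuous_map dS1 dist6 (fun x => proj1_sig (gmap x))).
  apply cont_R6; simpl; try apply ccont_const; apply ccont_lip; intros; [apply fst_le|apply snd_le].
Qed.

Lemma Hmap_cont : continuous_map (dprodI dO2) dO2 Hmap.
Proof.
  change (continuous_map (dprodI dO2) dist6 (fun x => Hvec x)).
  assert (G : forall p : O2 * I01, good (proj1_sig (fst p))) by (intros [[c Hc] s]; apply O2_good; auto).
  assert (Iv := ccont_invrr _ (fun p : O2 * I01 => proj1_sig (fst p)) (co_P _ q3_le) (co_P _ q5_le) G).
  assert (K : ccont (dprodI dO2) (fun p => kk (proj1_sig (fst p)) (proj1_sig (snd p)))).
  { unfold kk, Rdiv. apply ccont_plus; [apply co_s|]. apply ccont_mult; auto.
    apply ccont_plus; [apply ccont_const| apply ccont_opp, co_s]. }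
  apply cont_R6; unfold Hvec; simpl; apply ccont_mult; auto using co_s;
    first [apply co_P, q1_le | apply co_P, q2_le | apply co_P, q3_le | apply co_P, q4_le
          | apply co_P, q5_le | apply co_P, q6_le].
Qed.

Theorem mainTheorem3 : @homotopy_equivalent O2 S1 dO2 dS1.
Proof.
  exists fmap, gmap. split; [apply fmap_cont|]. split; [apply gmap_cont|]. split.
  - exists Hmap. split; [apply Hmap_cont|]. split.
    + intros [c Hc]. apply sig_eq. pose proof (rr_pos c (O2_good c Hc)).
      destruct c as [[[[[a0 b0] b1] c0] c1] c2]. unfold Hmap, Hvec, kk, fmap, gmap; simpl.
      f_equal; [f_equal; [f_equal; [f_equal; [f_equal|]|]|]|]; simpl in *; field; lra.
    + intros [c Hc]. apply sig_eq. pose proof (rr_pos c (O2_good c Hc)).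
      destruct c as [[[[[a0 b0] b1] c0] c1] c2]. unfold Hmap, Hvec, kk; simpl.
      f_equal; [f_equal; [f_equal; [f_equal; [f_equal|]|]|]|]; simpl in *; field; lra.
  - exists (fun p => fst p). split.
    + intros x eps He. exists eps; split; auto. intros y Hy. unfold dprodI in Hy.
      pose proof (Rmax_l (dS1 (fst x) (fst y)) (Rabs (proj1_sig (snd x) - proj1_sig (snd y)))). lra.
    + split; [|reflexivity]. intros [[a b] Hp]. apply sig_eq. unfold fmap, gmap, rr; simpl.
      unfold S1_pred in Hp; simpl in Hp. rewrite Hp, sqrt_1. f_equal; field.
Qed.
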